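(* Let $K=1$. For every reflection matrix $\mathbf\Phi$ for which (SDR1.2) has an optimal solution, problems (P1.1) and (P2.1) have the same optimal value. Consequently, when these subproblems attain their optima for all $\mathbf\Phi$, the joint problems (P1) and (P2) have the same optimal value, i.e. sensing-interference cancellation at the (single) user provides no gain.
   Context: Let $M,N\ge1$ be integers and $K=1$. Fixed data: $\mathbf G\in\mathbb C^{N\times M}$, $\mathbf h_{\mathrm d,1}\in\mathbb C^{M}$, $\mathbf h_{\mathrm r,1}\in\mathbb C^{N}$, threshold $\Gamma_1>0$, noise power $\sigma_1^2>0$, power budget $P_0>0$. A reflection matrix is $\mathbf\Phi=\mathrm{diag}(\mathbf v)$ with $\mathbf v\in\mathbb C^N$, $|v_n|=1$ for all $n$; put $\mathbf h_1=\mathbf h_{\mathrm d,1}+\mathbf G^H\mathbf\Phi^H\mathbf h_{\mathrm r,1}$ and $\mathbf H_1=\mathbf h_1\mathbf h_1^H$. For $\mathbf w_1\in\mathbb C^M$ and Hermitian $\mathbf R_0\succeq\mathbf 0$: Type-I SINR $\gamma_1^{\mathrm I}=|\mathbf h_1^H\mathbf w_1|^2/(\mathbf h_1^H\mathbf R_0\mathbf h_1+\sigma_1^2)$, Type-II SINR $\gamma_1^{\mathrm{II}}=|\mathbf h_1^H\mathbf w_1|^2/\sigma_1^2$. For Hermitian $\mathbf X\succeq\mathbf 0$ define $f(\mathbf X)=\mathrm{tr}\big((\mathbf G\mathbf X\mathbf G^H)^{-1}\big)$ if $\mathbf G\mathbf X\mathbf G^H$ is invertible and $+\infty$ otherwise.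 Problem (P1.1) (resp. (P2.1)), for fixed $\mathbf\Phi$: minimize $f(\mathbf w_1\mathbf w_1^H+\mathbf R_0)$ over $\mathbf w_1,\mathbf R_0\succeq\mathbf 0$ subject to $\gamma_1^{\mathrm I}\ge\Gamma_1$ (resp. $\gamma_1^{\mathrm{II}}\ge\Gamma_1$) and $\|\mathbf w_1\|^2+\mathrm{tr}(\mathbf R_0)\le P_0$. Problems (P1) and (P2) are the same minimizations carried out jointly over $\mathbf w_1,\mathbf R_0$ and all reflection matrices $\mathbf\Phi$. Problem (SDR1.2): minimize $f(\mathbf W_1+\mathbf R_0)$ over Hermitian $\mathbf W_1\succeq\mathbf 0,\mathbf R_0\succeq\mathbf 0$ subject to $(1+\tfrac1{\Gamma_1})\mathrm{tr}(\mathbf H_1\mathbf W_1)-\mathrm{tr}(\mathbf H_1(\mathbf W_1+\mathbf R_0))\ge\sigma_1^2$ and $\mathrm{tr}(\mathbf W_1)+\mathrm{tr}(\mathbf R_0)\le P_0$. *)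

(* Defs.v *)
From HB Require Import structures.
From mathcomp Require Import all_boot all_order all_algebra.
From mathcomp Require Import all_classical all_reals ereal.
From mathcomp Require Import complex.

Set Implicit Arguments.
Unset Strict Implicit.
Unset Printing Implicit Defensive.

Import Order.TTheory GRing.Theory Num.Theory.
Local Open Scope ring_scope.
Local Open Scope classical_set_scope.

Section ISAC.
Variable R : realType.
Local Notation C := R[i].

Definition hadj m n (A : 'M[C]_(m, n)) : 'M[C]_(n, m) :=
  (map_mx (@conjc R) A)^T.

Definition cRe (z : C) : R := complex.Re z.

Definition cabs2 (z : C) : R := Normc.normc z ^+ 2.

Definition hermitian n (A : 'M[C]_n) : Prop := hadj A = A.
Definition psd n (A : 'M[C]_n) : Prop :=
  hermitian A /\ forall x : 'cV[C]_n, 0 <= cRe ((hadj x *m A *m x) 0 0).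

Definition retr n (A : 'M[C]_n) : R := cRe (\tr A).
Definition quad n (A : 'M[C]_n) (x : 'cV[C]_n) : R :=
  cRe ((hadj x *m A *m x) 0 0).
Definition sqnorm n (w : 'cV[C]_n) : R := cRe ((hadj w *m w) 0 0).

Variables (M N : nat).
Variables (G : 'M[C]_(N, M)) (hd : 'cV[C]_M) (hr : 'cV[C]_N).
Variables (Gamma sigma2 P0 : R).

(* reflection vector: unit-modulus entries; Phi = diag(v) *)
Definition unit_modulus (v : 'cV[C]_N) : Prop := forall n, Normc.normc (v n 0) = 1.
Definition Phi (v : 'cV[C]_N) : 'M[C]_N := diag_mx v^T.

Definition h1 (v : 'cV[C]_N) : 'cV[C]_M := hd + hadj G *m hadj (Phi v) *m hr.
Definition H1 (v : 'cV[C]_N) : 'M[C]_M := h1 v *m hadj (h1 v).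

Definition fobj (X : 'M[C]_M) : \bar R :=
  let Y := G *m X *m hadj G in
  if Y \in unitmx then (retr (invmx Y))%:E else +oo%E.

Definition sinrI (v : 'cV[C]_N) (w : 'cV[C]_M) (R0 : 'M[C]_M) : R :=
  cabs2 ((hadj (h1 v) *m w) 0 0) / (quad R0 (h1 v) + sigma2).
Definition sinrII (v : 'cV[C]_N) (w : 'cV[C]_M) : R :=
  cabs2 ((hadj (h1 v) *m w) 0 0) / sigma2.

Definition feas11 (v : 'cV[C]_N) (w : 'cV[C]_M) (R0 : 'M[C]_M) : Prop :=
  psd R0 /\ Gamma <= sinrI v w R0 /\ sqnorm w + retr R0 <= P0.
Definition feas21 (v : 'cV[C]_N) (w : 'cV[C]_M) (R0 : 'M[C]_M) : Prop :=
  psd R0 /\ Gamma <= sinrII v w /\ sqnorm w + retr R0 <= P0.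

(* optimal values (infima; +oo if infeasible) *)
Definition val11 (v : 'cV[C]_N) : \bar R :=
  ereal_inf [set x | exists (w : 'cV[C]_M) (R0 : 'M[C]_M),
                       feas11 v w R0 /\ x = fobj (w *m hadj w + R0)].
Definition val21 (v : 'cV[C]_N) : \bar R :=
  ereal_inf [set x | exists (w : 'cV[C]_M) (R0 : 'M[C]_M),
                       feas21 v w R0 /\ x = fobj (w *m hadj w + R0)].

Definition valP1 : \bar R :=
  ereal_inf [set x | exists (v : 'cV[C]_N) (w : 'cV[C]_M) (R0 : 'M[C]_M),
                       unit_modulus v /\ feas11 v w R0 /\ x = fobj (w *m hadj w + R0)].
Definition valP2 : \bar R :=
  ereal_inf [set x | exists (v : 'cV[C]_N) (w : 'cV[C]_M) (R0 : 'M[C]_M),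
                       unit_modulus v /\ feas21 v w R0 /\ x = fobj (w *m hadj w + R0)].

Definition feasSDR (v : 'cV[C]_N) (W1 R0 : 'M[C]_M) : Prop :=
  psd W1 /\ psd R0 /\
  (1 + Gamma^-1) * retr (H1 v *m W1) - retr (H1 v *m (W1 + R0)) >= sigma2 /\
  retr W1 + retr R0 <= P0.
Definition SDR_has_opt (v : 'cV[C]_N) : Prop :=
  exists W1 R0, feasSDR v W1 R0 /\
    forall W1' R0', feasSDR v W1' R0' -> (fobj (W1 + R0) <= fobj (W1' + R0'))%E.

End ISAC.

(* Main.v *)
Require Import Defs.
From HB Require Import structures.
From mathcomp Require Import all_boot all_order all_algebra.
From mathcomp Require Import all_classical all_reals ereal.
From mathcomp Require Import complex.
From mathcomp Require Import lra ring.
Import Order.TTheory GRing.Theory Num.Theory.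
Set Implicit Arguments.
Unset Strict Implicit.
Unset Printing Implicit Defensive.
Local Open Scope ring_scope.


Section Aux.
Variable R : realType.
Local Notation C := R[i].

Lemma conjcN (a : C) : conjc (- a) = - conjc a. Proof. exact: rmorphN. Qed.
Lemma conjcM (a b : C) : conjc (a * b) = conjc a * conjc b. Proof. exact: rmorphM. Qed.
Lemma conjcV (a : C) : conjc (a^-1) = (conjc a)^-1. Proof. exact: fmorphV. Qed.
Lemma rcV (r : R) : ((r^-1)%:C)%C = ((r%:C)%C)^-1 :> C. Proof. exact: fmorphV. Qed.
Lemma hadjE m n (A : 'M[C]_(m,n)) i j : hadj A i j = conjc (A j i).
Proof. by rewrite /hadj !mxE. Qed.
Lemma hadjK m n (A : 'M[C]_(m,n)) : hadj (hadj A) = A.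
Proof. by apply/matrixP => i j; rewrite !hadjE conjcK. Qed.
Lemma hadjM m n p (A : 'M[C]_(m,n)) (B : 'M[C]_(n,p)) :
  hadj (A *m B) = hadj B *m hadj A.
Proof.
apply/matrixP => i j; rewrite hadjE !mxE rmorph_sum; apply: eq_bigr => k _.
by rewrite rmorphM !hadjE mulrC.
Qed.
Lemma hadjD m n (A B : 'M[C]_(m,n)) : hadj (A + B) = hadj A + hadj B.
Proof. by apply/matrixP => i j; rewrite /hadj !mxE rmorphD. Qed.
Lemma hadjN m n (A : 'M[C]_(m,n)) : hadj (- A) = - hadj A.
Proof. by apply/matrixP => i j; rewrite /hadj !mxE rmorphN. Qed.
Lemma hadjZ m n (c : C) (A : 'M[C]_(m,n)) : hadj (c *: A) = conjc c *: hadj A.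
Proof. by apply/matrixP => i j; rewrite /hadj !mxE rmorphM. Qed.
Lemma mx11M (P Q : 'M[C]_1) : (P *m Q) 0 0 = P 0 0 * Q 0 0.
Proof. by rewrite mxE big_ord1. Qed.

Definition bf {n} (X : 'M[C]_n) (x y : 'cV[C]_n) := (hadj x *m X *m y) 0 0.

Lemma bf_conj n (X : 'M[C]_n) (x y : 'cV[C]_n) : Defs.hermitian X -> conjc (bf X x y) = bf X y x.
Proof.
move=> hX; rewrite /bf -hadjE !hadjM hadjK -mulmxA.
by rewrite hX mulmxA.
Qed.
Lemma bfDl n (X : 'M[C]_n) x y z : bf X (x + y) z = bf X x z + bf X y z.
Proof. by rewrite /bf hadjD !mulmxDl mxE. Qed.
Lemma bfZl n (X : 'M[C]_n) t x z : bf X (t *: x) z = conjc t * bf X x z.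
Proof. by rewrite /bf hadjZ -!scalemxAl mxE. Qed.
Lemma bfDr n (X : 'M[C]_n) x y z : bf X z (x + y) = bf X z x + bf X z y.
Proof. by rewrite /bf mulmxDr mxE. Qed.
Lemma bfZr n (X : 'M[C]_n) t x z : bf X z (t *: x) = t * bf X z x.
Proof. by rewrite /bf -scalemxAr mxE. Qed.
Lemma bfDm n (A B : 'M[C]_n) x y : bf (A + B) x y = bf A x y + bf B x y.
Proof. by rewrite /bf mulmxDr mulmxDl mxE. Qed.
Lemma bfNm n (A : 'M[C]_n) x y : bf (- A) x y = - bf A x y.
Proof. by rewrite /bf mulmxN mulNmx mxE. Qed.
Lemma bf_shift n (X : 'M[C]_n) x h t : bf X (x + t *: h) (x + t *: h) =
  bf X x x + t * bf X x h + conjc t * bf X h x + conjc t * t * bf X h h.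
Proof. rewrite !bfDl !bfDr !bfZl !bfZr; ring. Qed.
Lemma bf_rank1 n (u x y : 'cV[C]_n) :
  bf (u *m hadj u) x y = (hadj x *m u) 0 0 * (hadj u *m y) 0 0.
Proof. by rewrite /bf !mulmxA -mx11M -!mulmxA. Qed.

Lemma ReJ (z : C) : complex.Re (z * conjc z) = Normc.normc z ^+ 2.
Proof.
case: z => a b /=; rewrite sqr_sqrtr ?addr_ge0 ?sqr_ge0 //.
by rewrite mulrN opprK !expr2.
Qed.
Lemma ReD (a b : C) : complex.Re (a + b) = complex.Re a + complex.Re b.
Proof. by case: a; case: b. Qed.
Lemma ReN (a : C) : complex.Re (- a) = - complex.Re a.
Proof. by case: a. Qed.
Lemma real_of_conj (u : C) : conjc u = u -> u = (complex.Re u)%:C%C.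
Proof.
case: u => a b /= [] hb; congr Complex.
lra.
Qed.
Lemma retrD n (A B : 'M[C]_n) : retr (A + B) = retr A + retr B.
Proof. by rewrite /retr /cRe mxtraceD ReD. Qed.
Lemma retrN n (A : 'M[C]_n) : retr (- A) = - retr A.
Proof. by rewrite /retr /cRe raddfN ReN. Qed.
Lemma sqnormE n (u : 'cV[C]_n) : sqnorm u = retr (u *m hadj u).
Proof. by rewrite /retr /sqnorm mxtrace_mulC /mxtrace big_ord1. Qed.
Lemma bf_rank1_norm n (u x : 'cV[C]_n) :
  cRe (bf (u *m hadj u) x x) = cabs2 ((hadj x *m u) 0 0).
Proof.
rewrite bf_rank1 /cabs2 -ReJ.
have -> : (hadj u *m x) 0 0 = conjc ((hadj x *m u) 0 0).
  by rewrite -hadjE hadjM hadjK.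
by [].
Qed.
Lemma hermX n (w : 'cV[C]_n) (R0 : 'M[C]_n) :
  Defs.hermitian R0 -> Defs.hermitian (w *m hadj w + R0).
Proof. by rewrite /Defs.hermitian => h; rewrite hadjD hadjM hadjK h. Qed.
Lemma quadX n (w : 'cV[C]_n) (R0 : 'M[C]_n) x :
  quad (w *m hadj w + R0) x = cabs2 ((hadj x *m w) 0 0) + quad R0 x.
Proof.
rewrite /quad -[(_ *m _ *m _) 0 0]/(bf _ x x) bfDm /cRe ReD -bf_rank1_norm //.
Qed.
Lemma cabs2_ge0 (z : C) : 0 <= cabs2 z.
Proof. exact: sqr_ge0. Qed.
End Aux.

Section Key.
Variable R : realType.
Local Notation C := R[i].
Variables (M N : nat) (G : 'M[C]_(N, M)) (hd : 'cV[C]_M) (hr : 'cV[C]_N)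
  (Gamma sigma2 P0 : R).
Hypotheses (hGamma : 0 < Gamma) (hsigma2 : 0 < sigma2).

Lemma key12 v w R0 : feas11 G hd hr Gamma sigma2 P0 v w R0 ->
  feas21 G hd hr Gamma sigma2 P0 v w R0.
Proof.
move=> [[hR hq] [hs hp]]; split; first by split.
split=> //; apply: (le_trans hs).
rewrite /sinrI /sinrII ler_wpM2l ?cabs2_ge0 // lef_pV2 ?posrE ?lerDr //.
  exact: hq.
by rewrite ltr_wpDl //; exact: hq.
Qed.
Lemma key21 v w R0 : feas21 G hd hr Gamma sigma2 P0 v w R0 ->
  exists w' R0', feas11 G hd hr Gamma sigma2 P0 v w' R0' /\
    w' *m hadj w' + R0' = w *m hadj w + R0.
Proof.
move=> [[hR hq] [hs hp]].
set h := h1 G hd hr v.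
set X := w *m hadj w + R0.
have hX : Defs.hermitian X by exact: hermX.
have qX : forall x, 0 <= quad X x.
  by move=> x; rewrite /X quadX addr_ge0 ?cabs2_ge0 //; exact: hq.
set z := (hadj h *m w) 0 0.
have hz : Gamma * sigma2 <= cabs2 z.
  by move: hs; rewrite /sinrII ler_pdivlMr.
set s := cRe (bf X h h).
have sE : s = cabs2 z + quad R0 h by rewrite /s /X -quadX.
have s_gt0 : 0 < s.
  rewrite sE; apply: ltr_wpDr; first exact: hq.
  apply: lt_le_trans hz; exact: mulr_gt0.
have sz : cabs2 z <= s by rewrite sE lerDl; exact: hq.
have bhh : bf X h h = (s%:C)%C by rewrite /s; apply: real_of_conj; exact: bf_conj.
set c : C := ((Num.sqrt s)^-1)%:C%C.
have cc : conjc c = c by exact: conjc_real.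
have c2 : c * c = (s^-1)%:C%C.
  rewrite -rmorphM /=; congr (_ %:C)%C.
  by rewrite -invfM -expr2 sqr_sqrtr // ltW.
set w' := c *: (X *m h).
have hw'x : forall x, (hadj x *m w') 0 0 = c * bf X x h.
  by move=> x; rewrite /w' -scalemxAr mxE mulmxA.
have hw'x2 : forall x, (hadj w' *m x) 0 0 = c * bf X h x.
  move=> x; rewrite /w' hadjZ hadjM hX -scalemxAl mxE cc //.
have rk : forall x, bf (w' *m hadj w') x x = c * c * (bf X x h * bf X h x).
  by move=> x; rewrite bf_rank1 hw'x hw'x2; ring.
exists w', (X - w' *m hadj w'); split; last by rewrite addrC subrK.
have hs0 : (s%:C)%C != 0 :> C.
  by rewrite (eqr_nat _ _ _) || (apply/eqP => -[] /eqP; rewrite gt_eqF).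
split; [split|split].
- by rewrite /Defs.hermitian hadjD hadjN hadjM hadjK hX.
- move=> x.
  pose b := bf X h x.
  pose t : C := - (b / (s%:C)%C).
  have := qX (x + t *: h).
  rewrite /quad -[(hadj (x + _) *m _ *m _) 0 0]/(bf _ _ _).
  rewrite -[(hadj x *m _ *m x) 0 0]/(bf _ x x).
  suff -> : bf X (x + t *: h) (x + t *: h) = bf (X - w' *m hadj w') x x by [].
  rewrite [bf (X - _) _ _]bfDm bfNm rk c2 bf_shift bhh.
  have -> : bf X x h = conjc b by rewrite /b bf_conj.
  have -> : conjc t = - (conjc b / (s%:C)%C).
    by rewrite /t conjcN conjcM conjcV conjc_real.
  rewrite -/b /t rcV.
  move: hs0; set sc := (s%:C)%C => hs0.
  field; exact: hs0.
- have rkh : bf (w' *m hadj w') h h = (s%:C)%C.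
    rewrite rk c2 bhh -!rmorphM /=; congr (_%:C)%C.
    by field; rewrite gt_eqF.
  rewrite /sinrI -/h -bf_rank1_norm /quad.
  rewrite -[(hadj h *m _ *m h) 0 0]/(bf _ h h) [bf (X - _) h h]bfDm bfNm rkh.
  rewrite bhh /cRe ReD ReN /= subrr add0r ler_pdivlMr //.
  exact: le_trans hz sz.
- rewrite sqnormE [retr (X - _)]retrD retrN addrC subrK /X retrD -sqnormE.
  exact: hp.
Qed.
Lemma val_eq v : val11 G hd hr Gamma sigma2 P0 v = val21 G hd hr Gamma sigma2 P0 v.
Proof.
rewrite /val11 /val21; congr ereal_inf; apply/seteqP; split => x /=.
- by move=> [w [R0 [hf ->]]]; exists w, R0; split => //; exact: key12.
- move=> [w [R0 [hf ->]]]; have [w' [R0' [hf' e]]] := key21 hf.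
  by exists w', R0'; rewrite e.
Qed.
Lemma valP_eq : valP1 G hd hr Gamma sigma2 P0 = valP2 G hd hr Gamma sigma2 P0.
Proof.
rewrite /valP1 /valP2; congr ereal_inf; apply/seteqP; split => x /=.
- by move=> [v [w [R0 [hu [hf ->]]]]]; exists v, w, R0; split => //; split => //; exact: key12.
- move=> [v [w [R0 [hu [hf ->]]]]]; have [w' [R0' [hf' e]]] := key21 hf.
  by exists v, w', R0'; rewrite e.
Qed.
End Key.

Unset Implicit Arguments.
Theorem proposition5 (R : realType) (M N : nat) (hM : (0 < M)%N) (hN : (0 < N)%N)
    (G : 'M[R[i]]_(N, M)) (hd : 'cV[R[i]]_M) (hr : 'cV[R[i]]_N)
    (Gamma sigma2 P0 : R)
    (hGamma : 0 < Gamma) (hsigma2 : 0 < sigma2) (hP0 : 0 < P0) :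
  (forall v : 'cV[R[i]]_N, unit_modulus v ->
     SDR_has_opt G hd hr Gamma sigma2 P0 v ->
     val11 G hd hr Gamma sigma2 P0 v = val21 G hd hr Gamma sigma2 P0 v) /\
  ((forall v : 'cV[R[i]]_N, unit_modulus v -> SDR_has_opt G hd hr Gamma sigma2 P0 v) ->
     valP1 G hd hr Gamma sigma2 P0 = valP2 G hd hr Gamma sigma2 P0).
Proof.
split.
- by move=> v _ _; exact: val_eq.
- by move=> _; exact: valP_eq.
Qed.
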